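(* For any $n\in\mathbb{N}$ with $n\geq2$, the language $({}_1L)\delta_R=\{(u,v)\delta_R: u,v\in L,\ 1u\equiv_{\mathrm{rps}_n}v\}$ is not regular, where $L=\bigcup_{B\subseteq\mathcal{A}_n}L^B$, with $L^\emptyset=\{\varepsilon\}$, $L^B=L^{(a_1)}\cdots L^{(a_k)}$ for $B=\{a_1<\cdots<a_k\}\neq\emptyset$, and $L^{(j)}=\{n\}^*\{n-1\}^*\cdots\{j+1\}^*\{j\}^+$ for $j\in\mathcal{A}_n$.
   Context: Let $\mathcal{A}_n=\{1<2<\cdots<n\}$. An rPS tableau is a finite (possibly empty) sequence of nonempty bottom-justified columns of boxes filled with positive integers, such that the entries of each column are weakly decreasing from top to bottom and the bottom entries of the columns form a strictly increasing sequence from left to right. Right insertion of a symbol $a$ into an rPS tableau $B$: if $a$ is strictly greater than every entry of the bottom row, append a new column consisting of $a$ at the right end; otherwise, let $z$ be the leftmost bottom-row entry with $z\geq a$ and put $a$ in a new box at the bottom of the column of $z$ (the previous entries of that column move up one box). For $w=w_1\cdots w_k$, $\mathfrak{R}_r(w)$ is obtained by starting with the empty tableau and right-inserting $w_1,\dots,w_k$ in order. $u\equiv_{\mathrm{rps}_n}v$ means $\mathfrak{R}_r(u)=\mathfrak{R}_r(v)$ for $u,v\in\mathcal{A}_n^*$. For the padding symbol $\$\notin\mathcal{A}_n$, $\delta_R:\mathcal{A}_n^*\times\mathcal{A}_n^*\to((\mathcal{A}_n\cup\{\$\})\times(\mathcal{A}_n\cup\{\$\}))^*$ sends $(u_1\cdots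 u_m,v_1\cdots v_p)$ to the word of pairs $(u_i,v_i)$ obtained after padding the shorter word on the right with $\$$'s to equal length. *)

(* Defs.v *)
From mathcomp Require Import all_boot.
Set Implicit Arguments. Unset Strict Implicit. Unset Printing Implicit Defensive.

(* Symbols of A_n = {1 < 2 < ... < n} are natural numbers 1..n. *)

(* An rPS tableau is a sequence of columns (left to right); each column is
   listed from BOTTOM to TOP, so the head of a column is its bottom entry. *)
Definition rps_tableau := seq (seq nat).

Fixpoint rps_rins (B : rps_tableau) (a : nat) : rps_tableau :=
  match B with
  | [::] => [:: [:: a]]
  | c :: B' => if a <= head 0 c then (a :: c) :: B' else c :: rps_rins B' a
  end.

Definition rps_Rr (w : seq nat) : rps_tableau := foldl rps_rins [::] w.

Definition rps_equiv (u v : seq nat) : Prop := rps_Rr u = rps_Rr v.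

Definition Lj (n j : nat) (w : seq nat) : Prop :=
  exists c : nat -> nat, 0 < c j /\
    w = flatten [seq nseq (c i) i | i <- rev (iota j (n.+1 - j))].

Definition LB (n : nat) (bs : seq nat) (w : seq nat) : Prop :=
  exists ws : seq (seq nat),
    size ws = size bs /\ w = flatten ws /\
    (forall i, i < size bs -> Lj n (nth 0 bs i) (nth [::] ws i)).

Definition Lang (n : nat) (w : seq nat) : Prop :=
  exists bs : seq nat, sorted ltn bs /\ all (fun a => 0 < a <= n) bs /\ LB n bs w.

(* The padding symbol $ is None; a letter a is Some a. *)
Definition padnth (u : seq nat) (i : nat) : option nat :=
  if i < size u then Some (nth 0 u i) else None.

Definition deltaR (u v : seq nat) : seq (option nat * option nat) :=
  mkseq (fun i => (padnth u i, padnth v i)) (maxn (size u) (size v)).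

Definition lang_1L_deltaR (n : nat) (w : seq (option nat * option nat)) : Prop :=
  exists u v, Lang n u /\ Lang n v /\ rps_equiv (1 :: u) v /\ w = deltaR u v.

Definition regular (Sigma : Type) (K : seq Sigma -> Prop) : Prop :=
  exists (Q : finType) (q0 : Q) (delta : Q -> Sigma -> Q) (F : pred Q),
    forall w, K w <-> F (foldl delta q0 w).

(* Main.v *)
Require Import Defs.
From mathcomp Require Import all_boot.
From mathcomp Require Import zify.

Lemma ins2 p q r : 0 < q ->
  foldl rps_rins [:: nseq p 1; nseq q 2] (nseq r 2) = [:: nseq p 1; nseq (q + r) 2].
Proof.
elim: r q => [|r IH] q q0 /=; first by rewrite addn0.
have -> : (2 <= head 0 (nseq p 1)) = false by case: (p).
case: q q0 => // q _ /=.
by rewrite (IH q.+2) // addSnnS.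
Qed.

Lemma ins1 p q r : 0 < p ->
  foldl rps_rins [:: nseq p 1; nseq q 2] (nseq r 1) = [:: nseq (p + r) 1; nseq q 2].
Proof.
elim: r p => [|r IH] p p0 /=; first by rewrite addn0.
case: p p0 => // p _ /=.
by rewrite (IH p.+2) // addSnnS.
Qed.

Lemma ins1' p r : 0 < p ->
  foldl rps_rins [:: nseq p 1] (nseq r 1) = [:: nseq (p + r) 1].
Proof.
elim: r p => [|r IH] p p0 /=; first by rewrite addn0.
case: p p0 => // p _ /=.
by rewrite (IH p.+2) // addSnnS.
Qed.

Lemma Rr_u k a : rps_Rr (1 :: nseq k.+1 2 ++ nseq a 1) = [:: nseq a.+1 1; nseq k.+1 2].
Proof.
rewrite /rps_Rr /= foldl_cat.
have -> : [:: [:: 2]] = [:: nseq 1 2] by [].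
rewrite (ins2 1 1 k) // (ins1 1 _ a) //.
Qed.

Lemma Rr_v b c : rps_Rr (nseq b.+1 1 ++ nseq c.+1 2) = [:: nseq b.+1 1; nseq c.+1 2].
Proof.
rewrite /rps_Rr /= foldl_cat.
have -> : [:: [:: 1]] = [:: nseq 1 1] by [].
rewrite (ins1' 1 b) //=.
idtac.
by rewrite add0n (ins2 (b.+1) 1 c).
Qed.

Lemma flat0 (c : nat -> nat) s : (forall i, i \in s -> c i = 0) ->
  flatten [seq nseq (c i) i | i <- s] = [::].
Proof.
elim: s => //= x s IH H.
by rewrite H ?inE ?eqxx // IH // => i Hi; apply: H; rewrite inE Hi orbT.
Qed.

Lemma Lj_single n j k : 0 < j <= n -> 0 < k -> Lj n j (nseq k j).
Proof.
move=> /andP [j0 jn] k0.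
exists (fun i => if i == j then k else 0); rewrite eqxx; split => //.
have -> : n.+1 - j = (n - j).+1 by lia.
rewrite /= rev_cons -cats1 map_cat flatten_cat /= eqxx cats0 flat0 //.
move=> i; rewrite mem_rev mem_iota => /andP [Hi _].
by have -> : (i == j) = false by apply/negbTE; lia.
Qed.

Lemma Lj_two n a : 2 <= n -> 0 < a -> Lj n 1 (nseq a 2 ++ nseq a 1).
Proof.
move=> n2 a0.
exists (fun i => if i == 1 then a else if i == 2 then a else 0); split => //.
have -> : n.+1 - 1 = (n - 2).+2 by lia.
rewrite /= rev_cons rev_cons -!cats1 -catA !map_cat !flatten_cat /= !cats0 flat0 //.
move=> i; rewrite mem_rev mem_iota => /andP [Hi _].
have -> : (i == 1) = false by apply/negbTE; lia.
by have -> : (i == 2) = false by apply/negbTE; lia.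
Qed.

Lemma Lang_u n a : 2 <= n -> 0 < a -> Lang n (nseq a 2 ++ nseq a 1).
Proof.
move=> n2 a0; exists [:: 1]; split => //; split; first by rewrite /= andbT; lia.
exists [:: nseq a 2 ++ nseq a 1]; split => //; split; first by rewrite /= cats0.
by case=> // _; apply: Lj_two.
Qed.

Lemma Lang_v n b c : 2 <= n -> 0 < b -> 0 < c -> Lang n (nseq b 1 ++ nseq c 2).
Proof.
move=> n2 b0 c0; exists [:: 1; 2]; split => //; split; first by rewrite /= andbT; lia.
exists [:: nseq b 1; nseq c 2]; split => //; split; first by rewrite /= cats0.
case=> [|[|]] //= _; apply: Lj_single => //; lia.
Qed.

Lemma padnth_none u k s : size u <= s -> pmap id [seq padnth u i | i <- iota s k] = [::].
Proof.
elim: k s => //= k IH s Hs.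
by rewrite /padnth ltnNge Hs /= IH // (leq_trans Hs).
Qed.

Lemma padnth_map u m : size u <= m -> pmap id [seq padnth u i | i <- iota 0 m] = u.
Proof.
move=> Hm; rewrite -(subnKC Hm) iotaD map_cat pmap_cat.
have -> : [seq padnth u i | i <- iota 0 (size u)] = map Some (map (nth 0 u) (iota 0 (size u))).
  rewrite -map_comp; apply/eq_in_map => i; rewrite mem_iota /padnth add0n /=.
  by move=> ->.
rewrite add0n padnth_none // .
rewrite cats0 (@map_pK _ _ id Some (fun _ => erefl)).
exact: mkseq_nth.
Qed.

Lemma deltaR_fst u v : pmap id (map fst (deltaR u v)) = u.
Proof.
rewrite /deltaR /mkseq -map_comp (@eq_map _ _ _ (padnth u)) //.
by apply: padnth_map; rewrite leq_maxl.
Qed.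

Lemma deltaR_snd u v : pmap id (map snd (deltaR u v)) = v.
Proof.
rewrite /deltaR /mkseq -map_comp (@eq_map _ _ _ (padnth v)) //.
by apply: padnth_map; rewrite leq_maxr.
Qed.

Lemma deltaR_inj u v u' v' : deltaR u v = deltaR u' v' -> u = u' /\ v = v'.
Proof.
move=> E; split.
  by rewrite -(deltaR_fst u v) E deltaR_fst.
by rewrite -(deltaR_snd u v) E deltaR_snd.
Qed.

Lemma deltaR_cat x y x' y' : size x = size x' ->
  deltaR (x ++ y) (x' ++ y') = deltaR x x' ++ deltaR y y'.
Proof.
move=> Hs; rewrite /deltaR /mkseq !size_cat -Hs maxnn.
have -> : maxn (size x + size y) (size x + size y') = size x + maxn (size y) (size y') by lia.
rewrite iotaD map_cat add0n.
have -> : iota (size x) (maxn (size y) (size y')) = map (addn (size x)) (iota 0 (maxn (size y) (size y'))) by rewrite -iotaDl addn0.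
rewrite -map_comp; congr (_ ++ _).
  apply/eq_in_map => i; rewrite mem_iota add0n /= /padnth !size_cat !nth_cat -Hs => Hi.
  by rewrite Hi !(leq_trans Hi (leq_addr _ _)).
apply: eq_map => i /=; rewrite /padnth !size_cat !nth_cat -Hs ltn_add2l.
by rewrite ltn_add2l !ltnNge leq_addr /= addKn.
Qed.

Theorem proposition6p4 (n : nat) : 2 <= n -> ~ regular (lang_1L_deltaR n).
Proof.
move=> n2 [Q [q0 [delta [F HF]]]].
pose pre (a : nat) := deltaR (nseq a 2) (nseq a 1).
pose suf (a : nat) := deltaR (nseq a 1) (1 :: nseq a 2).
have Ecat : forall a b, pre a ++ suf b = deltaR (nseq a 2 ++ nseq b 1) (nseq a.+1 1 ++ nseq b 2).
  move=> a b; rewrite /pre /suf -deltaR_cat ?size_nseq //; congr deltaR.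
  by elim: a => //= a ->.
have inK : forall a, F (foldl delta q0 (pre a.+1 ++ suf a.+1)).
  move=> a; apply/HF; rewrite Ecat.
  exists (nseq a.+1 2 ++ nseq a.+1 1), (nseq a.+2 1 ++ nseq a.+1 2).
  split; first exact: Lang_u.
  split; first exact: Lang_v.
  by split => //; rewrite /rps_equiv Rr_u Rr_v.
pose f (i : 'I_(#|Q|.+1)) := foldl delta q0 (pre i.+1).
have : ~~ injectiveb f.
  apply/negP => /injectiveP inj; have := leq_card f inj; rewrite card_ord; lia.
case/injectivePn => i [j ij fij].
have := inK j; rewrite foldl_cat -/(f j) -fij /f -foldl_cat => /HF.
rewrite Ecat => [[u [v [_ [_ [Heq Ed]]]]]].
case: (deltaR_inj _ _ _ _ Ed) => Eu Ev; subst u v.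
move: Heq; rewrite /rps_equiv.
rewrite Rr_u Rr_v => [[/(congr1 size)]]; rewrite !size_nseq => E _.
by move: ij; rewrite -val_eqE /= E eqxx.
Qed.
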